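(* Let $(\mathbb{K},|\cdot|)$ be an algebraically closed normed field, $f\in\mathbb{K}[z]$ a polynomial of degree $n\ge2$, $\xi\in\mathbb{K}^n$ a root-vector of $f$, $N\ge1$ and $1\le p\le\infty$. Suppose $x\in\mathbb{K}^n$ has pairwise distinct components and $E(x)\le R$. Then $f$ has only simple zeros in $\mathbb{K}$, $x\in D_N$, and \[ \|T^{(N)}(x)-\xi\|\preceq\beta_N(E(x))\,\|x-\xi\|. \]
   Context: $a_0$ is the leading coefficient of $f$. For $1\le p\le\infty$, $\|x\|_p=(\sum_i|x_i|^p)^{1/p}$ (max-norm if $p=\infty$). For $x\in\mathbb{K}^n$, $\|x\|=(|x_1|,\dots,|x_n|)\in\mathbb{R}^n$, $\preceq$ the coordinatewise order. $d_i(x)=\min_{j\ne i}|x_i-x_j|$, $d(x)=(d_1(x),\dots,d_n(x))$; for $x\in\mathbb{K}^n$, $y\in\mathbb{R}^n$ with nonzero components, $x/y=(|x_1|/y_1,\dots,|x_n|/y_n)$. A root-vector of $f$ is $\xi$ with $f(z)=a_0\prod_i(z-\xi_i)$ for all $z$. $E(x)=\|(x-\xi)/d(x)\|_p$. Weierstrass-type maps: $T^{(0)}(x)=x$ on $D_0=\mathbb{K}^n$; $D_{N+1}=\{x\in D_N: x_i\ne T^{(N)}_j(x)\ \forall i\ne j\}$, and for $x\in D_{N+1}$, $T^{(N+1)}_i(x)=x_i-\dfrac{f(x_i)}{a_0\prod_{j\ne i}(x_i-T^{(N)}_j(x))}$. Real functions: $\omega(t)=\left(1+\frac{t}{(n-1)^{1/p}}\right)^{n-1}$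 (with $(n-1)^{1/p}=1$ if $p=\infty$), $\Psi(t)=(1+2t)\omega(t)$, $R$ the unique positive solution of $\Psi(t)=2$. On $[0,R]$: $\phi_0\equiv1$, $\omega_N(t)=\left(1+\frac{t\phi_N(t)}{(n-1)^{1/p}}\right)^{n-1}$, $\phi_{N+1}(t)=\frac{\omega_N(t)-1}{1-2t\omega_N(t)}$; for $N\ge1$, $\beta_N(t)=\omega_{N-1}(t)-1$. *)

(* Defs.v *)
From HB Require Import structures.
From mathcomp Require Import all_boot all_order all_algebra.
From mathcomp Require Import reals ereal exp.
Set Implicit Arguments. Unset Strict Implicit. Unset Printing Implicit Defensive.
Import Order.TTheory GRing.Theory Num.Theory.
Local Open Scope ring_scope.

Section Defs.
Variables (R : realType) (K : closedFieldType).

Definition is_absval (abs : K -> R) : Prop :=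
  (forall x, abs x = 0 <-> x = 0) /\
  (forall x y, abs (x * y) = abs x * abs y) /\
  (forall x y, abs (x + y) <= abs x + abs y).

(* p-norm on R^n, p in [1, +oo] encoded as an extended real ( +oo = max-norm ). *)
Definition pnorm (n : nat) (p : \bar R) (v : 'I_n -> R) : R :=
  match p with
  | EFin q => (\sum_(i < n) `|v i| `^ q) `^ q^-1
  | +oo%E => \big[Num.max/0]_(i < n) `|v i|
  | -oo%E => 0
  end.

Definition rootp (n : nat) (p : \bar R) : R :=
  match p with
  | EFin q => (n.-1)%:R `^ q^-1
  | _ => 1
  end.

Variables (abs : K -> R).

(* d_i(x) = min_{j <> i} |x_i - x_j|  (the max is only used as a neutral
   element of the min; for n >= 2 the index set is nonempty). *)
Definition dist_i (n : nat) (x : 'I_n -> K) (i : 'I_n) : R :=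
  \big[Num.min/ \big[Num.max/0]_(j < n) abs (x i - x j)]_(j < n | j != i)
     abs (x i - x j).

Definition Efun (n : nat) (p : \bar R) (xi x : 'I_n -> K) : R :=
  pnorm p (fun i => abs (x i - xi i) / dist_i x i).

Variable (f : {poly K}).

Definition root_vector (n : nat) (xi : 'I_n -> K) : Prop :=
  forall z : K, f.[z] = lead_coef f * \prod_(i < n) (z - xi i).

(* Weierstrass-type maps T^(N) (total; meaningful on D_N) *)
Fixpoint Tmap (n : nat) (N : nat) (x : 'I_n -> K) : 'I_n -> K :=
  match N with
  | 0%N => x
  | N'.+1 => fun i => x i - f.[x i] /
              (lead_coef f * \prod_(j < n | j != i) (x i - Tmap N' x j))
  end.

Fixpoint Dom (n : nat) (N : nat) (x : 'I_n -> K) : Prop :=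
  match N with
  | 0%N => True
  | N'.+1 => Dom N' x /\ (forall i j : 'I_n, i != j -> x i != Tmap N' x j)
  end.

End Defs.

Section RealFuns.
Variables (R : realType) (n : nat) (p : \bar R).

Definition omega (t : R) : R := (1 + t / rootp n p) ^+ n.-1.
Definition Psi (t : R) : R := (1 + 2 * t) * omega t.

Fixpoint phiN (N : nat) (t : R) : R :=
  match N with
  | 0%N => 1
  | N'.+1 => let w := (1 + t * phiN N' t / rootp n p) ^+ n.-1 in
             (w - 1) / (1 - 2 * t * w)
  end.
Definition omegaN (N : nat) (t : R) : R := (1 + t * phiN N t / rootp n p) ^+ n.-1.
Definition betaN (N : nat) (t : R) : R := omegaN N.-1 t - 1.

End RealFuns.

(* Main.v *)
Require Import Defs.
From HB Require Import structures.
From mathcomp Require Import all_boot all_order all_algebra.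
From mathcomp Require Import reals ereal exp.
From mathcomp Require Import hoelder.
From mathcomp Require Import lra ring.
Import Order.TTheory GRing.Theory Num.Theory.
Local Open Scope ring_scope.


Section Abs.
Variables (R : realType) (K : closedFieldType) (abs : K -> R).
Hypothesis habs : is_absval abs.

Lemma abs_eq0 x : (abs x = 0) <-> x = 0.
Proof. by case: habs. Qed.
Lemma absM x y : abs (x * y) = abs x * abs y.
Proof. by case: habs => _ []. Qed.
Lemma absD x y : abs (x + y) <= abs x + abs y.
Proof. by case: habs => _ []. Qed.
Lemma abs0 : abs 0 = 0.
Proof. by apply/abs_eq0. Qed.
Lemma abs1 : abs 1 = 1.
Proof.
have h : abs 1 = abs 1 * abs 1 by rewrite -absM mulr1.
have nz : abs 1 != 0 by apply/eqP => /abs_eq0/eqP; rewrite oner_eq0.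
by apply: (mulfI nz); rewrite -h mulr1.
Qed.
Lemma absN1 : abs (-1) = 1.
Proof.
have [i hi] : exists i : K, i * i = -1.
  have : size ('X^2 + 1 : {poly K}) != 1%N.
    by rewrite size_polyDl ?size_polyXn ?size_poly1.
  move/closed_rootP => [i]; rewrite /root !hornerE => /eqP h.
  by exists i; rewrite -expr2; apply/eqP; rewrite -subr_eq0 opprK h.
have h1 : abs (-1) * abs (-1) = 1 by rewrite -absM mulrNN mulr1 abs1.
have h2 : 0 <= abs (-1) by rewrite -hi absM -expr2 sqr_ge0.
have : (abs (-1) - 1) * (abs (-1) + 1) = 0.
  by rewrite -subr_sqr expr1n expr2 h1 subrr.
move/eqP; rewrite mulf_eq0 => /orP [/eqP h|/eqP h].
  by apply/eqP; rewrite -subr_eq0 h.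
have : 0 < abs (-1) + 1 by rewrite ltr_wpDl.
by rewrite h ltxx.
Qed.
Lemma absN x : abs (- x) = abs x.
Proof. by rewrite -mulN1r absM absN1 mul1r. Qed.
Lemma abs_ge0 x : 0 <= abs x.
Proof.
have := absD x (- x); rewrite subrr abs0 absN; lra.
Qed.
Lemma absB x y : abs (x - y) = abs (y - x).
Proof. by rewrite -absN opprB. Qed.
Lemma absV x : abs (x^-1) = (abs x)^-1.
Proof.
have [->|nz] := eqVneq x 0; first by rewrite invr0 abs0 invr0.
have h : abs x * abs (x^-1) = 1 by rewrite -absM divff // abs1.
have nz' : abs x != 0 by apply/eqP => /abs_eq0/eqP; rewrite (negbTE nz).
by rewrite -[abs (x^-1)]mul1r -(mulVf nz') -mulrA h mulr1.
Qed.
Lemma absMdiv x y : abs (x / y) = abs x / abs y.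
Proof. by rewrite absM absV. Qed.
Lemma abs_prod (I : Type) (r : seq I) (P : pred I) (F : I -> K) :
  abs (\prod_(i <- r | P i) F i) = \prod_(i <- r | P i) abs (F i).
Proof. by apply: (big_morph abs absM abs1). Qed.
Lemma abs_subr x y : abs x - abs y <= abs (x - y).
Proof. by rewrite lerBlDr; have := absD (x - y) y; rewrite subrK. Qed.
Lemma abs_gt0 x : x != 0 -> 0 < abs x.
Proof.
move=> nz; rewrite lt_neqAle abs_ge0 andbT eq_sym.
by apply/eqP => /abs_eq0/eqP; rewrite (negbTE nz).
Qed.
End Abs.
Arguments abs_eq0 {R K abs}.
Arguments absM {R K abs}.
Arguments absD {R K abs}.
Arguments abs0 {R K abs}.
Arguments abs1 {R K abs}.
Arguments absN1 {R K abs}.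
Arguments absN {R K abs}.
Arguments abs_ge0 {R K abs}.
Arguments absB {R K abs}.
Arguments absV {R K abs}.
Arguments absMdiv {R K abs}.
Arguments abs_prod {R K abs}.
Arguments abs_subr {R K abs}.
Arguments abs_gt0 {R K abs}.


Section RealFacts.
Variables (R : realType) (n : nat) (p : \bar R) (Rr : R).
Hypotheses (hn : (1 < n)%N) (hr : 0 < rootp n p) (hR : 0 < Rr) (hPsi : Psi n p Rr = 2).

Lemma omega_ge1 s : 0 <= s -> 1 <= omega n p s.
Proof.
move=> s0; apply: exprn_ege1; rewrite lerDl divr_ge0 // ltW //.
Qed.

Lemma omega_gt1 s : 0 < s -> 1 < omega n p s.
Proof.
move=> s0; rewrite /omega expr_gt1 ?ltrDl ?divr_gt0 //; last first.
  by rewrite addr_ge0 // divr_ge0 // ltW.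
by case: n hn => [|[|m]].
Qed.

Lemma omega_mono s s' : 0 <= s -> s <= s' -> omega n p s <= omega n p s'.
Proof.
move=> s0 ss'; have s'0 : 0 <= s' by exact: le_trans ss'.
have r0 : 0 <= rootp n p by exact: ltW.
apply: lerXn2r; rewrite ?nnegrE ?addr_ge0 ?divr_ge0 //.
by rewrite lerD2l ler_pM2r ?invr_gt0.
Qed.

Lemma omegaN_bounds N s : 0 <= s -> 0 <= phiN n p N s <= 1 ->
  1 <= omegaN n p N s <= omega n p s.
Proof.
move=> s0 /andP [f0 f1]; apply/andP; split.
  by apply: exprn_ege1; rewrite lerDl divr_ge0 ?mulr_ge0 // ltW.
have r0 : 0 <= rootp n p by exact: ltW.
apply: lerXn2r; rewrite ?nnegrE ?addr_ge0 ?divr_ge0 ?mulr_ge0 //.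
rewrite lerD2l ler_pM2r ?invr_gt0 //.
by rewrite ler_piMr.
Qed.

Lemma key_t (t : R) : 0 <= t -> t <= Rr -> 2 * t * omega n p t < 1.
Proof.
move=> t0 tR.
have hP : (1 + 2 * t) * omega n p t <= Psi n p Rr.
  rewrite /Psi; apply: ler_pM.
  - lra.
  - have := omega_ge1 t t0; lra.
  - lra.
  - exact: omega_mono.
rewrite hPsi in hP.
have [->|tpos] := eqVneq t 0; first by rewrite mulr0 mul0r.
have tp : 0 < t by rewrite lt_neqAle eq_sym tpos.
have w1 := omega_gt1 t tp.
move: hP; rewrite mulrDl mul1r; lra.
Qed.

Lemma phi_bounds (t : R) : 0 <= t -> t <= Rr -> forall N, 0 <= phiN n p N t <= 1.
Proof.
move=> t0 tR; elim=> [|N IH]; first by rewrite /= ler01 lexx.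
have /andP [w1 w2] := omegaN_bounds N t t0 IH.
have k := key_t t t0 tR.
have hP : (1 + 2 * t) * omega n p t <= Psi n p Rr.
  rewrite /Psi; apply: ler_pM.
  - lra.
  - have := omega_ge1 t t0; lra.
  - lra.
  - exact: omega_mono.
rewrite hPsi in hP.
change (phiN n p N.+1 t) with
  ((omegaN n p N t - 1) / (1 - 2 * t * omegaN n p N t)).
have den : 2 * t * omegaN n p N t <= 2 * t * omega n p t.
  by rewrite ler_wpM2l // mulr_ge0.
have denp : 0 < 1 - 2 * t * omegaN n p N t by lra.
apply/andP; split; first by apply: divr_ge0; lra.
rewrite ler_pdivrMr // mul1r.
have : (1 + 2 * t) * omegaN n p N t <= (1 + 2 * t) * omega n p t.
  by rewrite ler_wpM2l //; lra.
move: hP; rewrite !mulrDl !mul1r; lra.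
Qed.

End RealFacts.


Lemma hoelder_seq (R : realType) (I : Type) (s : seq I) (P : pred I) (c : I -> R) (q : R) :
  1 < q -> (forall j, 0 <= c j) ->
  \sum_(j <- s | P j) c j <=
  (\sum_(j <- s | P j) c j `^ q) `^ q^-1 * (\sum_(j <- s | P j) (1 : R)) `^ (1 - q^-1).
Proof.
move=> q1 c0.
have q0 : 0 < q by lra.
have qi1 : q^-1 < 1 by rewrite invf_lt1.
have qi0 : 0 < q^-1 by rewrite invr_gt0.
pose q' := (1 - q^-1)^-1.
have q'0 : 0 < q' by rewrite invr_gt0 subr_gt0.
have q'i : q'^-1 = 1 - q^-1 by rewrite invrK.
elim: s => [|j s IH].
  by rewrite !big_nil mulr_ge0 // powR_ge0.
rewrite !big_cons; case: (P j) => //.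
set A := \sum_(j <- s | P j) c j `^ q.
set k := \sum_(j <- s | P j) (1 : R).
have A0 : 0 <= A by apply: sumr_ge0 => l _; exact: powR_ge0.
have k0 : 0 <= k by apply: sumr_ge0 => l _; exact: ler01.
apply: le_trans (lerD (lexx (c j)) IH) _.
have := @hoelder2 R (c j) (A `^ q^-1) 1 (k `^ (1 - q^-1)) q q'
  (c0 j) (powR_ge0 _ _) ler01 (powR_ge0 _ _) q0 q'0.
rewrite q'i addrCA subrr addr0 => /(_ erefl).
rewrite mulr1 -!powRrM mulVf ?gt_eqF // powRr1 //.
rewrite mulrC mulfV ?gt_eqF ?subr_gt0 // powRr1 // powR1.
by rewrite (addrC 1 k).
Qed.

Lemma rootp_gt0 (R : realType) (n : nat) (p : \bar R) : (1 < n)%N -> 0 < rootp n p.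
Proof.
move=> hn; case: p => [q| |] //=; apply: powR_gt0.
by rewrite ltr0n; case: n hn => [|[|m]].
Qed.

Lemma sum_bound (R : realType) (n : nat) (p : \bar R) (u : 'I_n -> R) (i : 'I_n) :
  (1 < n)%N -> (1 <= p)%E -> (forall j, 0 <= u j) ->
  (\sum_(j < n | j != i) u j) / (n.-1)%:R <= pnorm p u / rootp n p.
Proof.
move=> hn hp u0.
have m0 : 0 < (n.-1)%:R :> R by rewrite ltr0n; case: n hn i u u0 => [|[|m]].
have cnt : \sum_(j < n | j != i) (1 : R) = (n.-1)%:R.
  by rewrite sumr_const cardC1 card_ord.
case: p hp => [q| |] //= hq.
- rewrite lee_fin in hq.
  have q0 : 0 < q by lra.
  have sA : \sum_(j < n | j != i) `|u j| `^ q <= \sum_(j < n) `|u j| `^ q.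
    rewrite [X in _ <= X](bigID (fun j => j != i)) /= lerDl.
    by apply: sumr_ge0 => j _; exact: powR_ge0.
  have sA' : (\sum_(j < n | j != i) `|u j| `^ q) `^ q^-1 <= (\sum_(j < n) `|u j| `^ q) `^ q^-1.
    apply: ge0_ler_powR => //; first by rewrite invr_ge0 ltW.
    + by rewrite nnegrE; apply: sumr_ge0 => j _; exact: powR_ge0.
    + by rewrite nnegrE; apply: sumr_ge0 => j _; exact: powR_ge0.
  have [q1|q1] := eqVneq q 1.
    subst q.
    have e1 : \sum_(j < n) `|u j| `^ 1 = \sum_(j < n) u j.
      by apply: eq_bigr => j _; rewrite powRr1 // ger0_norm.
    rewrite invr1 e1 powRr1 ?sumr_ge0 // powRr1 ?ler0n //.
    rewrite ler_pM2r ?invr_gt0 //.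
    rewrite [X in _ <= X](bigID (fun j => j != i)) /= lerDl.
    by apply: sumr_ge0 => j _.
  have q1' : 1 < q by rewrite lt_neqAle eq_sym q1.
  have := @hoelder_seq R _ (index_enum 'I_n) (fun j => j != i) (fun j => `|u j|) q q1' (fun j => normr_ge0 _).
  rewrite cnt => h.
  rewrite ler_pdivrMr // mulrAC ler_pdivlMr ?powR_gt0 //.
  have e : (n.-1)%:R `^ (1 - q^-1) * (n.-1)%:R `^ q^-1 = (n.-1)%:R :> R.
    by rewrite -powRD ?subrK ?oner_eq0 // powRr1 // ler0n.
  apply: le_trans (_ : (\sum_(j < n | j != i) `|u j|) * (n.-1)%:R `^ q^-1 <= _).
    rewrite ler_wpM2r ?powR_ge0 //.
    by apply: ler_sum => j _; exact: real_ler_norm (ger0_real (u0 j)).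
  apply: le_trans (ler_wpM2r (powR_ge0 _ _) h) _.
  rewrite -mulrA e mulrC [X in X <= _]mulrC; apply: ler_wpM2r => //; exact: ler0n.
- have sM : \sum_(j < n | j != i) u j <= \sum_(j < n | j != i) \big[Num.max/0]_(k < n) `|u k|.
    apply: ler_sum => j _; apply: le_trans (real_ler_norm (ger0_real (u0 j))) _.
    exact: le_bigmax.
  rewrite sumr_const cardC1 card_ord -mulr_natr in sM.
  by rewrite divr1 ler_pdivrMr.
Qed.

Lemma prod_bound (R : realType) (n : nat) (p : \bar R) (u : 'I_n -> R) (i : 'I_n) (ph : R) :
  (1 < n)%N -> (1 <= p)%E -> (forall j, 0 <= u j) -> 0 <= ph ->
  \prod_(j < n | j != i) (1 + ph * u j) <= (1 + pnorm p u * ph / rootp n p) ^+ n.-1.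
Proof.
move=> hn hp u0 ph0.
have m0 : 0 < (n.-1)%:R :> R by rewrite ltr0n; case: n hn i u u0 => [|[|m]].
have E0 : {in predC1 i, forall j, 0 <= 1 + ph * u j}.
  by move=> j _; rewrite addr_ge0 // mulr_ge0.
have h := (leif_AGM E0).1.
rewrite cardC1 card_ord in h.
apply: le_trans h _.
have r0 := @rootp_gt0 R n p hn.
apply: lerXn2r.
- rewrite nnegrE; apply: divr_ge0; last exact: ltW.
  by apply: sumr_ge0 => j _; rewrite addr_ge0 // mulr_ge0.
- rewrite nnegrE addr_ge0 //; apply: divr_ge0; last exact: ltW.
  apply: mulr_ge0 => //.
  case: (p) => [q| |] //=; first by rewrite powR_ge0.
  by apply: le_trans (le_bigmax _ _ i); exact: normr_ge0.
have sb := @sum_bound R n p u i hn hp u0.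
have e : (\sum_(j in predC1 i) (1 + ph * u j)) / (n.-1)%:R =
   1 + ph * ((\sum_(j < n | j != i) u j) / (n.-1)%:R).
  rewrite big_split /= sumr_const cardC1 card_ord -mulr_sumr.
  rewrite mulrDl divff ?gt_eqF //; congr (_ + _).
  by rewrite mulrA.
rewrite e lerD2l [X in _ <= X]mulrAC [X in _ <= X]mulrC.
exact: ler_wpM2l.
Qed.

Lemma comp_le_pnorm (R : realType) (n : nat) (p : \bar R) (u : 'I_n -> R) (j : 'I_n) :
  (1 <= p)%E -> (forall j, 0 <= u j) -> u j <= pnorm p u.
Proof.
move=> hp u0; case: p hp => [q| |] //= hq.
- rewrite lee_fin in hq.
  have q0 : 0 < q by lra.
  have e : u j = (`|u j| `^ q) `^ q^-1.
    by rewrite -powRrM mulfV ?gt_eqF // powRr1 // ger0_norm.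
  rewrite {1}e; apply: ge0_ler_powR; first by rewrite invr_ge0 ltW.
  + by rewrite nnegrE powR_ge0.
  + by rewrite nnegrE; apply: sumr_ge0 => k _; exact: powR_ge0.
  rewrite (bigD1 j) //= lerDl.
  by apply: sumr_ge0 => k _; exact: powR_ge0.
- by apply: le_trans (le_bigmax _ _ j); rewrite ger0_norm.
Qed.

Lemma real_step (R : realFieldType) (w t u d D L ph : R) : 0 <= t -> 0 <= u -> u <= t -> 0 <= d -> d <= D -> 1 <= w -> 2*t*w < 1 -> ph * (1 - 2*t*w) = w - 1 -> D - w*u*d <= L -> 0 <= ph -> (w-1)*(u*d) <= ph * u * L.
Proof.
move=> t0 u0 ut d0 dD w1 k e hL ph0.
have hwd : 0 <= w * d by apply: mulr_ge0 => //; lra.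
have a : w * d * u <= w * d * (2 * t) by apply: ler_wpM2l => //; lra.
have h1 : (1 - 2*t*w) * d <= L.
  have : w*u*d = w * d * u by ring.
  have : 2*t*w*d = w * d * (2 * t) by ring.
  move: a; rewrite mulrBl mul1r; lra.
have pu : 0 <= ph * u by exact: mulr_ge0.
have := ler_wpM2l pu h1.
have -> : ph * u * ((1 - 2 * t * w) * d) = (ph * (1 - 2*t*w)) * (u * d) by ring.
by rewrite e.
Qed.

Section Pert.
Variables (R : realType) (K : closedFieldType) (abs : K -> R).
Hypothesis habs : is_absval abs.

Lemma prod_pert (I : Type) (s : seq I) (P : pred I) (a : I -> K) :
  abs (\prod_(j <- s | P j) (1 + a j)) <= \prod_(j <- s | P j) (1 + abs (a j)) /\
  abs (1 - \prod_(j <- s | P j) (1 + a j)) <= \prod_(j <- s | P j) (1 + abs (a j)) - 1.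
Proof.
elim: s => [|j s [IH1 IH2]].
  by rewrite !big_nil abs1 // subrr abs0 // subrr.
rewrite !big_cons; case: (P j) => //.
set Pr := \prod_(j <- s | P j) (1 + a j) in IH1 IH2 *.
set Q := \prod_(j <- s | P j) (1 + abs (a j)) in IH1 IH2 *.
have a0 := abs_ge0 habs (a j).
have Pr0 := abs_ge0 habs Pr.
split.
  rewrite absM //; apply: ler_pM => //; first exact: abs_ge0.
  by apply: le_trans (absD habs _ _) _; rewrite abs1 // lexx.
have -> : 1 - (1 + a j) * Pr = (1 - Pr) + - (a j * Pr) by ring.
apply: le_trans (absD habs _ _) _.
rewrite absN // absM //.
have : abs (a j) * abs Pr <= abs (a j) * Q by apply: ler_wpM2l.
move: IH2; lra.
Qed.
End Pert.

Section Main.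
Variables (R : realType) (K : closedFieldType) (abs : K -> R) (f : {poly K})
  (n : nat) (xi : 'I_n -> K) (p : \bar R) (Rr : R) (x : 'I_n -> K).
Hypotheses (habs : is_absval abs) (hn : (2 <= n)%N) (hsize : size f = n.+1)
  (hroot : root_vector f xi) (hp : (1 <= p)%E) (hR : 0 < Rr)
  (hPsi : Psi n p Rr = 2) (hinj : injective x) (hE : Efun abs p xi x <= Rr).

Local Notation t := (Efun abs p xi x).
Local Notation d := (dist_i abs x).
Local Notation uf := (fun j => abs (x j - xi j) / dist_i abs x j).
Local Notation u j := (abs (x j - xi j) / dist_i abs x j).

Lemma hn1 : (1 < n)%N. Proof. exact: hn. Qed.

Lemma other (j : 'I_n) : exists k : 'I_n, k != j.
Proof.
have h0 : (0 < n)%N by apply: leq_trans hn.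
case: j => [[|m] hm].
  by exists (Ordinal hn).
by exists (Ordinal h0).
Qed.

Lemma absx_gt0 i j : i != j -> 0 < abs (x i - x j).
Proof.
move=> ij; apply: (abs_gt0 habs); rewrite subr_eq0.
by apply/eqP => /hinj /eqP; rewrite (negbTE ij).
Qed.

Lemma dist_gt0 j : 0 < d j.
Proof.
rewrite /dist_i; elim/big_ind: _.
- have [k hk] := other j.
  have hjk : j != k by rewrite eq_sym.
  apply: (lt_le_trans (absx_gt0 j k hjk)).
  exact: (le_bigmax _ (fun k => abs (x j - x k)) k).
- by move=> a b ha hb; rewrite lt_min ha hb.
- by move=> k hk; apply: absx_gt0; rewrite eq_sym.
Qed.

Lemma dist_le i j : i != j -> d j <= abs (x i - x j).
Proof.
move=> ij; rewrite (absB habs (x i)) /dist_i.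
apply: (@bigmin_le_cond _ _ _ _ i (fun k => k != j) (fun k => abs (x j - x k))).
exact: ij.
Qed.

Lemma u_ge0 j : 0 <= u j.
Proof. apply: divr_ge0; [exact: (abs_ge0 habs) | exact: ltW (dist_gt0 j)]. Qed.

Lemma u_le_t j : u j <= t.
Proof. exact: (@comp_le_pnorm R n p uf j hp u_ge0). Qed.

Lemma t_ge0 : 0 <= t.
Proof. have [k _] := other (Ordinal hn); exact: le_trans (u_ge0 k) (u_le_t k). Qed.

Lemma e_eq j : abs (x j - xi j) = u j * d j.
Proof. by rewrite divfK // gt_eqF // dist_gt0. Qed.

Lemma rp : 0 < rootp n p. Proof. exact: (@rootp_gt0 R n p hn1). Qed.

Lemma phiB N : 0 <= phiN n p N t <= 1.
Proof. exact: (@phi_bounds R n p Rr hn1 rp hPsi t t_ge0 hE N). Qed.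

Lemma omB N : 1 <= omegaN n p N t <= omega n p t.
Proof. exact: (@omegaN_bounds R n p rp N t t_ge0 (phiB N)). Qed.

Lemma keyN N : 2 * t * omegaN n p N t < 1.
Proof.
have k := @key_t R n p Rr hn1 rp hPsi t t_ge0 hE.
have /andP [_ w2] := omB N.
apply: le_lt_trans k; apply: ler_wpM2l => //.
by apply: mulr_ge0 => //; exact: t_ge0.
Qed.

Lemma a0_neq0 : lead_coef f != 0.
Proof. by rewrite lead_coef_eq0 -size_poly_eq0 hsize. Qed.

Lemma T_bound N i :
  (forall j, j != i -> x i != Tmap f N x j /\
     abs (Tmap f N x j - xi j) <= phiN n p N t * u j * abs (x i - Tmap f N x j)) ->
  abs (Tmap f N.+1 x i - xi i) <= (omegaN n p N t - 1) * abs (x i - xi i).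
Proof.
move=> H.
have eT : Tmap f N.+1 x i = x i - f.[x i] /
   (lead_coef f * \prod_(j < n | j != i) (x i - Tmap f N x j)) by [].
have fx : f.[x i] = lead_coef f * ((x i - xi i) * \prod_(j < n | j != i) (x i - xi j)).
  by rewrite hroot (bigD1 i).
pose a j := (Tmap f N x j - xi j) / (x i - Tmap f N x j).
have prodE : \prod_(j < n | j != i) (x i - xi j) / \prod_(j < n | j != i) (x i - Tmap f N x j)
    = \prod_(j < n | j != i) (1 + a j).
  rewrite -prodf_div; apply: eq_bigr => j hj; have [hne _] := H j hj.
  have nz : x i - Tmap f N x j != 0 by rewrite subr_eq0.
  rewrite /a -(divff nz) -mulrDl; congr (_ / _); ring.
have Cnz : \prod_(j < n | j != i) (x i - Tmap f N x j) != 0.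
  apply/prodf_neq0 => j hj; have [hne _] := H j hj; by rewrite subr_eq0.
have a0 := a0_neq0.
have main : Tmap f N.+1 x i - xi i = (x i - xi i) * (1 - \prod_(j < n | j != i) (1 + a j)).
  rewrite eT fx -prodE; field.
  by rewrite a0 Cnz.
rewrite main (absM habs) mulrC; apply: ler_wpM2r; first exact: (abs_ge0 habs).
have [_ hp2] := @prod_pert R K abs habs _ (index_enum 'I_n) (fun j => j != i) a.
apply: le_trans hp2 _; rewrite lerD2r.
have ph0 : 0 <= phiN n p N t by have /andP [] := phiB N.
apply: le_trans (_ : _ <= \prod_(j < n | j != i) (1 + phiN n p N t * u j)) _.
  apply: ler_prod => j hj; apply/andP; split.
    by apply: addr_ge0; [exact: ler01 | exact: (abs_ge0 habs)].
  rewrite lerD2l /a (absMdiv habs).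
  have [hne hb] := H j hj.
  have pos : 0 < abs (x i - Tmap f N x j) by apply: (abs_gt0 habs); rewrite subr_eq0.
  by rewrite ler_pdivrMr.
exact: (@prod_bound R n p uf i (phiN n p N t) hn1 hp u_ge0 ph0).
Qed.

Lemma inv N : Dom f N x /\ (forall i j, j != i -> x i != Tmap f N x j /\
     abs (Tmap f N x j - xi j) <= phiN n p N t * u j * abs (x i - Tmap f N x j)).
Proof.
elim: N => [|N [IHd IHb]].
  split => // i j ji; split.
    by apply/eqP => /hinj /eqP; rewrite eq_sym (negbTE ji).
  rewrite /= mul1r {1}e_eq; apply: ler_wpM2l; first exact: u_ge0.
  by apply: dist_le; rewrite eq_sym.
split.
  by split => // i j ij; have [] := IHb i j; first by rewrite eq_sym.
move=> i j ji.
have Tb := T_bound N j (IHb j).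
set Tj := Tmap f N.+1 x j in Tb *.
have /andP [w1 w2] := omB N.
have kN := keyN N.
set w := omegaN n p N t in Tb w1 w2 kN *.
have ij : i != j by rewrite eq_sym.
have hd := dist_gt0 j.
have hD := dist_le i j ij.
have uj0 := u_ge0 j. have ujt := u_le_t j. have t0 := t_ge0.
have ee := e_eq j.
have hxT : abs (Tj - x j) <= w * abs (x j - xi j).
  have -> : Tj - x j = (Tj - xi j) + (xi j - x j) by ring.
  apply: le_trans (absD habs _ _) _.
  rewrite (absB habs (xi j)); rewrite mulrBl mul1r in Tb; lra.
have hL : abs (x i - x j) - w * u j * d j <= abs (x i - Tj).
  have := abs_subr habs (x i - x j) (Tj - x j).
  have -> : x i - x j - (Tj - x j) = x i - Tj by ring.
  rewrite -mulrA -ee; lra.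
have Dpos := absx_gt0 i j ij.
split.
  have h1 : u j * d j <= t * abs (x i - x j) by apply: ler_pM => //; exact: ltW.
  have h2 : w * (u j * d j) <= w * (t * abs (x i - x j)).
    by apply: ler_wpM2l => //; lra.
  have h3 : w * t < 1 by nra.
  have h4 : w * (t * abs (x i - x j)) < abs (x i - x j).
    by rewrite mulrA -[X in _ < X]mul1r ltr_pM2r.
  have h5 : 0 < abs (x i - Tj) by rewrite -!mulrA in hL; lra.
  apply/eqP => h; move: h5; by rewrite h subrr abs0 // ltxx.
have phd : phiN n p N.+1 t * (1 - 2 * t * w) = w - 1.
  by rewrite /= divfK // subr_eq0; apply/eqP => h; move: kN; rewrite -h ltxx.
have ph0 : 0 <= phiN n p N.+1 t by have /andP [] := phiB N.+1.
apply: le_trans Tb _; rewrite {1}ee.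
apply: (@real_step R w t (u j) (d j) (abs (x i - x j)) (abs (x i - Tj)) _) => //; exact: ltW.
Qed.
Lemma xi_neq i j : i != j -> xi i != xi j.
Proof.
move=> ij; apply/eqP => e.
have k0 := keyN 0.
have /andP [w1 _] := omB 0.
have t0 := t_ge0.
have t2 : 2 * t < 1.
  apply: le_lt_trans k0; rewrite -[X in X <= _]mulr1; apply: ler_wpM2l => //.
  by apply: mulr_ge0.
have ji : j != i by rewrite eq_sym.
have Dp := absx_gt0 i j ij.
have d1 : d i <= abs (x i - x j) by rewrite (absB habs); exact: dist_le ji.
have d2 : d j <= abs (x i - x j) by exact: dist_le ij.
have h : abs (x i - x j) <= abs (x i - xi i) + abs (x j - xi j).
  have -> : x i - x j = (x i - xi i) + - (x j - xi j) by rewrite e; ring.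
  by apply: le_trans (absD habs _ _) _; rewrite (absN habs).
rewrite (e_eq i) (e_eq j) in h.
have h1 : u i * d i <= t * abs (x i - x j).
  by apply: ler_pM => //; [exact: u_ge0 | exact: ltW (dist_gt0 i) | exact: u_le_t].
have h2 : u j * d j <= t * abs (x i - x j).
  by apply: ler_pM => //; [exact: u_ge0 | exact: ltW (dist_gt0 j) | exact: u_le_t].
have h3 : 2 * (t * abs (x i - x j)) < abs (x i - x j).
  by rewrite mulrA -[X in _ < X]mul1r ltr_pM2r.
move: h h1 h2 h3; clear.
set A := u i * d i; set B := u j * d j; set C := t * abs (x i - x j); set D := abs (x i - x j).
move=> h h1 h2 h3; lra.
Qed.

Lemma zero_poly (q : {poly K}) : (forall w, q.[w] = 0) -> q = 0.
Proof.
move=> hq; apply/eqP; apply/negPn/negP => qnz.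
have : size (q * 'X + 1%:P) != 1%N.
  by rewrite size_MXaddC oner_eq0 andbF; rewrite eqSS size_poly_eq0.
move/closed_rootP => [w]; rewrite /root !hornerE hq mul0r add0r.
by rewrite oner_eq0.
Qed.

Lemma simple_roots (z : K) : root f z -> ~~ (('X - z%:P) ^+ 2 %| f).
Proof.
move=> rz; apply/negP => /dvdpP [g hg].
have a0 := a0_neq0.
have [k _ hk] : exists2 k, k \in predT & (z - xi k == 0).
  apply/prodf_eq0; move: rz; rewrite /root hroot mulf_eq0 (negbTE a0) /=.
  done.
move: hk; rewrite subr_eq0 => /eqP hk.
set P2 := lead_coef f *: \prod_(k0 < n | k0 != k) ('X - (xi k0)%:P).
have E : g * ('X - z%:P) - P2 = 0.
  have : (g * ('X - z%:P) - P2) * ('X - z%:P) = 0.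
    apply: zero_poly => w.
    rewrite hornerM hornerD hornerN hornerM !hornerXsubC hornerZ horner_prod.
    under eq_bigr => k0 _ do rewrite hornerXsubC.
    have hw := hroot w.
    rewrite {1}hg hornerM horner_exp hornerXsubC (bigD1 k) //= -hk in hw.
    rewrite mulrBl -mulrA -expr2 hw.
    by rewrite -mulrA (mulrC _ (w - z)) subrr.
  move/eqP; rewrite mulf_eq0 polyXsubC_eq0 orbF => /eqP //.
have : (g * ('X - z%:P)).[z] = P2.[z] by apply/eqP; rewrite -subr_eq0 -hornerN -hornerD E horner0.
rewrite hornerM hornerXsubC subrr mulr0 hornerZ horner_prod => /esym/eqP.
rewrite mulf_eq0 (negbTE a0) /= => /prodf_eq0 [k0 hk0].
rewrite hornerXsubC hk subr_eq0 => /eqP e.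
have hkk : k != k0 by rewrite eq_sym.
by move: (xi_neq k k0 hkk); rewrite e eqxx.
Qed.

End Main.

Theorem lemma2p9 (R : realType) (K : closedFieldType) (abs : K -> R)
  (f : {poly K}) (n : nat) (xi : 'I_n -> K) (N : nat) (p : \bar R)
  (Rr : R) (x : 'I_n -> K) :
  is_absval abs ->
  (2 <= n)%N ->
  size f = n.+1 ->
  root_vector f xi ->
  (1 <= N)%N ->
  (1 <= p)%E ->
  0 < Rr -> Psi n p Rr = 2 ->
  injective x ->
  Efun abs p xi x <= Rr ->
  [/\ (forall z : K, root f z -> ~~ (('X - z%:P) ^+ 2 %| f)),
      Dom f N x &
      forall i : 'I_n,
        abs (Tmap f N x i - xi i) <= betaN n p N (Efun abs p xi x) * abs (x i - xi i)].
Proof.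
move=> habs hn hsize hroot hN hp hR hPsi hinj hE.
have I := @inv R K abs f n xi p Rr x habs hn hsize hroot hp hPsi hinj hE.
split.
- exact: (@simple_roots R K abs f n xi p Rr x habs hn hsize hroot hp hPsi hinj hE).
- by have [] := I N.
- case: N hN => [//|N] _ i.
  have [_ hb] := I N.
  exact: (@T_bound R K abs f n xi p Rr x habs hn hsize hroot hp hPsi hinj hE N i (hb i)).
Qed.
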